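(* Let $\mathbb{F}=\mathbb{F}_p$, $r_1,\dots,r_n\in\mathbb{F}^N$, and let $j_1,\dots,j_k\in[N]$ be distinct. Then $$\mathcal{S}^{\{j_1,\dots,j_k\}}(r_1,\dots,r_n)=\sum_{\tau=(\tau_1,\dots,\tau_k)}\ \prod_{t=1}^k\Big((-1)^{|\tau_t|}|\tau_t|!\;r_{\tau_t}(j_t)\Big)\cdot\mathcal{S}\Big(r\big[[n]\setminus\textstyle\bigcup_t\tau_t\big]\Big),$$ where the sum is over all ordered $k$-tuples of pairwise disjoint, possibly empty, subsets $\tau_t$ of $[n]$.
   Context: For vectors $w_1,\dots,w_L\in\mathbb{F}^N$ and $T\subseteq[N]$, $\mathcal{S}^T(w_1,\dots,w_L)=\sum_\rho\prod_{i=1}^Lw_i(\rho(i))$ over injective maps $\rho:[L]\to[N]\setminus T$, and $\mathcal{S}=\mathcal{S}^{\emptyset}$. For $\tau\subseteq[n]$, $r_\tau$ is the coordinatewise product of $r_i$, $i\in\tau$ (the all-ones vector if $\tau=\emptyset$); $r[\sigma]$ is the list of $r_i$, $i\in\sigma$, and $\mathcal{S}(r[\emptyset])=1$. $r(j)$ is the $j$-th coordinate. *)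

(* Defs.v *)
From HB Require Import structures.
From mathcomp Require Import all_boot all_order all_algebra.
Set Implicit Arguments. Unset Strict Implicit. Unset Printing Implicit Defensive.
Import GRing.Theory.
Local Open Scope ring_scope.

(* Vectors in F^N are functions 'I_N -> F; [N] is 'I_N (0-based). *)

Definition Ssum (R : comNzRingType) (N : nat) (T : {set 'I_N})
    (ws : seq ('I_N -> R)) : R :=
  \sum_(rho : {ffun 'I_(size ws) -> 'I_N} |
          injectiveb rho && [forall i, rho i \notin T])
     \prod_(i < size ws) (nth (fun _ => 0) ws i) (rho i).

Definition S0 (R : comNzRingType) (N : nat) (ws : seq ('I_N -> R)) : R :=
  Ssum set0 ws.

Definition rprod (R : comNzRingType) (n N : nat) (r : 'I_n -> 'I_N -> R)
    (tau : {set 'I_n}) (j : 'I_N) : R :=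
  \prod_(i in tau) r i j.

Definition rsub (R : Type) (n N : nat) (r : 'I_n -> 'I_N -> R)
    (sigma : {set 'I_n}) : seq ('I_N -> R) :=
  [seq r i | i <- enum sigma].

(* Main.v *)
Require Import Defs.
From HB Require Import structures.
From mathcomp Require Import all_boot all_order all_algebra.
Set Implicit Arguments. Unset Strict Implicit. Unset Printing Implicit Defensive.
Import GRing.Theory.
Local Open Scope ring_scope.

Definition wv (R : comNzRingType) n N (r : 'I_n -> 'I_N -> R) (i : 'I_n)
  (o : option 'I_N) : R := if o is Some x then r i x else 1.

Definition good n N (T : {set 'I_N}) (A : {set 'I_n})
  (rho : {ffun 'I_n -> option 'I_N}) : bool :=
  [&& [forall i, (rho i != None) == (i \in A)],
      [forall i, forall i', forall x,
         ((rho i == Some x) && (rho i' == Some x)) ==> (i == i')] &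
      [forall i, forall x, (rho i == Some x) ==> (x \notin T)]].

Lemma goodP n N (T : {set 'I_N}) (A : {set 'I_n}) (rho : {ffun 'I_n -> option 'I_N}) :
  reflect [/\ forall i, (rho i != None) = (i \in A),
              forall i i' x, rho i = Some x -> rho i' = Some x -> i = i' &
              forall i x, rho i = Some x -> x \notin T] (good T A rho).
Proof.
apply: (iffP and3P) => [[/forallP h1 /forallP h2 /forallP h3] | [h1 h2 h3]]; split.
- by move=> i; have /eqP := h1 i.
- move=> i i' x e e'; have /forallP/(_ i')/forallP/(_ x) := h2 i.
  by rewrite e e' !eqxx => /eqP.
- by move=> i x e; have /forallP/(_ x) := h3 i; rewrite e eqxx.
- by apply/forallP => i; rewrite h1.
- apply/forallP => i; apply/forallP => i'; apply/forallP => x.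
  by apply/implyP => /andP[/eqP e /eqP e']; rewrite (h2 _ _ _ e e').
- apply/forallP => i; apply/forallP => x; apply/implyP => /eqP; exact: h3.
Qed.

Definition F (R : comNzRingType) n N (r : 'I_n -> 'I_N -> R) (T : {set 'I_N})
  (A : {set 'I_n}) : R :=
  \sum_(rho : {ffun 'I_n -> option 'I_N} | good T A rho) \prod_i wv r i (rho i).

Definition upd (I : finType) (V : Type) (f : {ffun I -> V}) (a : I) (v : V)
  : {ffun I -> V} := [ffun i => if i == a then v else f i].

Lemma step (R : comNzRingType) n N (r : 'I_n -> 'I_N -> R) (T : {set 'I_N})
  (A : {set 'I_n}) (j : 'I_N) : j \notin T ->
  F r T A = F r (j |: T) A + \sum_(a in A) r a j * F r (j |: T) (A :\ a).
Proof.
move=> jT.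
rewrite /F (bigID (fun rho : {ffun 'I_n -> option 'I_N} => [exists i, rho i == Some j])) /= addrC.
congr (_ + _).
  apply: eq_bigl => rho.
  apply/idP/goodP => [/andP[/goodP[h1 h2 h3] /existsPn h4] | [h1 h2 h3]].
    split=> // i x e; rewrite !inE negb_or (h3 i x e) andbT.
    by apply/eqP => ex; move: (h4 i); rewrite e ex eqxx.
  apply/andP; split.
    apply/goodP; split=> // i x /h3; rewrite !inE negb_or; case/andP=> //.
  apply/existsPn => i; apply/eqP => /h3; by rewrite !inE eqxx.
have -> : \sum_(rho | good T A rho && [exists i, rho i == Some j])
            \prod_i wv r i (rho i) =
          \sum_(rho | good T A rho) \sum_(a in A | rho a == Some j)
            \prod_i wv r i (rho i).
  rewrite [RHS](bigID (fun rho : {ffun 'I_n -> option 'I_N} => [exists i, rho i == Some j])) /=.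
  rewrite [X in _ = _ + X]big1 ?addr0; last first.
    move=> rho /andP[_ /existsPn h]; apply: big_pred0 => a.
    by rewrite (negbTE (h a)) andbF.
  apply: eq_big => // rho /andP[/goodP[h1 h2 h3] /existsP[a /eqP ha]].
  rewrite [RHS](big_pred1 a) // => a' /=.
  apply/andP/eqP => [[_ /eqP h] | ->]; first exact: h2 h ha.
  by rewrite ha eqxx -h1 ha.
rewrite (exchange_big_dep (mem A)) /=; last by move=> rho a _ /andP[].
apply: eq_bigr => a aA.
rewrite (reindex_onto (fun rho' => upd rho' a (Some j)) (fun rho => upd rho a None)) /=; last first.
  move=> rho /andP[_ /andP[_ /eqP e]]; apply/ffunP => i; rewrite !ffunE.
  by case: eqP => // ->.
rewrite big_distrr /=; apply: eq_big => rho'.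
  apply/idP/idP.
    move=> /andP[/andP[/goodP[h1 h2 h3] _] /eqP e].
    have ra : rho' a = None by rewrite -e ffunE eqxx.
    have nea : forall i x, rho' i = Some x -> i != a.
      by move=> i0 x0 H; apply/eqP => E; rewrite E ra in H.
    apply/goodP; split.
    - move=> i; rewrite !inE; case: (i =P a) => [->|/eqP ne]; first by rewrite ra.
      by have := h1 i; rewrite ffunE (negbTE ne) => ->.
    - move=> i i' x Hi Hi'; apply: (h2 i i' x); rewrite ffunE.
        by rewrite (negbTE (nea _ _ Hi)).
      by rewrite (negbTE (nea _ _ Hi')).
    - move=> i x Hi; rewrite !inE negb_or; apply/andP; split.
        apply/eqP => ex; have := h2 i a x; rewrite !ffunE eqxx ex.
        by rewrite (negbTE (nea _ _ Hi)) -ex => /(_ Hi erefl) /eqP; rewrite (negbTE (nea _ _ Hi)).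
      by apply: (h3 i); rewrite ffunE (negbTE (nea _ _ Hi)).
  move=> /goodP[h1 h2 h3].
  have ra : rho' a = None.
    by apply/eqP; rewrite -[_ == _]negbK h1 !inE eqxx.
  rewrite ffunE !eqxx aA !andbT; apply/andP; split.
    apply/goodP; split.
    - move=> i; rewrite ffunE; case: (i =P a) => [->|/eqP ne]; first by rewrite aA.
      by rewrite h1 !inE ne.
    - move=> i i' x; rewrite !ffunE; case: (i =P a) => [->|/eqP ne];
        case: (i' =P a) => [->|/eqP ne'] //.
      + by move=> [<-] /h3; rewrite !inE eqxx.
      + by move=> /h3; rewrite !inE => /norP[/negP nj _] [ej]; rewrite ej eqxx in nj.
      + exact: h2.
    - move=> i x; rewrite ffunE; case: (i =P a) => [_ [<-] // | _ /h3].
      by rewrite !inE negb_or => /andP[].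
  by apply/eqP/ffunP => i; rewrite !ffunE; case: (i =P a) => [->|//]; rewrite ra.
move=> /andP[_ /eqP e].
have ra : rho' a = None by rewrite -e ffunE eqxx.
rewrite (bigD1 a) //= [in RHS](bigD1 a) //= ffunE eqxx ra /= mul1r.
congr (_ * _); apply: eq_bigr => i ne; by rewrite ffunE (negbTE ne).
Qed.

From mathcomp Require Import ring.

Definition cc (R : comNzRingType) n N (r : 'I_n -> 'I_N -> R) (s : {set 'I_n})
  (j : 'I_N) : R := (-1) ^+ #|s| * (#|s|`!)%:R * rprod r s j.

Lemma cc0 (R : comNzRingType) n N (r : 'I_n -> 'I_N -> R) j : cc r set0 j = 1.
Proof. by rewrite /cc /rprod cards0 big_set0 !mulr1. Qed.

Lemma cc_split (R : comNzRingType) n N (r : 'I_n -> 'I_N -> R) (s : {set 'I_n}) j :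
  s != set0 -> cc r s j = - \sum_(a in s) r a j * cc r (s :\ a) j.
Proof.
case/set0Pn => a0 a0s.
have [m' hm] : exists m', #|s| = m'.+1 by exists #|s|.-1; rewrite prednK // card_gt0; apply/set0Pn; exists a0.
rewrite (eq_bigr (fun _ => (-1) ^+ m' * (m'`!)%:R * rprod r s j)); last first.
  move=> a aS; rewrite /cc /rprod (bigD1 a aS) /=.
  have -> : #|s :\ a| = m' by move: (cardsD1 a s); rewrite aS hm add1n => -[].
  have -> : \prod_(i in s :\ a) r i j = \prod_(i in s | i != a) r i j.
    by apply: eq_bigl => i; rewrite !inE andbC.
  ring.
rewrite sumr_const /cc hm factS natrM -mulr_natr exprS; ring.
Qed.

Lemma inv (R : comNzRingType) n N (r : 'I_n -> 'I_N -> R) (T : {set 'I_N}) j :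
  j \notin T -> forall A : {set 'I_n}, F r (j |: T) A =
  \sum_(s : {set 'I_n} | s \subset A) cc r s j * F r T (A :\: s).
Proof.
move=> jT A; have [m] := ubnP #|A|; elim: m A => // m IH A hA.
have E := step r A jT.
rewrite -[F r (j |: T) A](addrK (\sum_(a in A) r a j * F r (j |: T) (A :\ a))) -E.
rewrite (bigD1 set0) ?sub0set //= cc0 setD0 mul1r.
congr (_ + _).
rewrite (eq_bigr (fun a => r a j * \sum_(s : {set 'I_n} | s \subset A :\ a) cc r s j * F r T (A :\ a :\: s))); last first.
  move=> a aA; rewrite IH //; move: (cardsD1 a A) hA; rewrite aA add1n => ->.
  by rewrite ltnS.
rewrite (eq_bigr (fun s : {set 'I_n} => - \sum_(a in s) r a j * cc r (s :\ a) j * F r T (A :\: s))); last first.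
  by move=> s /andP[_ s0]; rewrite cc_split // mulNr big_distrl.
rewrite sumrN; congr (- _).
rewrite (exchange_big_dep (mem A)) /=; last by move=> s a /andP[/subsetP sA _] /sA.
apply: eq_bigr => a aA.
rewrite big_distrr /=.
rewrite [RHS](reindex_onto (fun s : {set 'I_n} => a |: s) (fun s : {set 'I_n} => s :\ a)) /=; last first.
  by move=> s /andP[_ aS]; rewrite setD1K.
apply: eq_big => s.
  apply/idP/idP.
    move=> sA; have aS : a \notin s by apply/negP => /(subsetP sA); rewrite !inE eqxx.
    rewrite setU1K // eqxx setU11 andbT !andbT; apply/andP; split.
      rewrite subUset sub1set aA /=; apply: subset_trans sA _; exact: subD1set.
    by apply/set0Pn; exists a; rewrite setU11.
  move=> /andP[/andP[/andP[sA _] _] /eqP e]; rewrite -e.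
  apply/subsetP => x; rewrite !inE => /andP[xa xs]; rewrite xa /=.
  by apply: (subsetP sA); rewrite !inE xs.
move=> sA; have aS : a \notin s by apply/negP => /(subsetP sA); rewrite !inE eqxx.
rewrite setU1K // mulrA; congr (_ * F r T _).
by apply/setP => x; rewrite !inE negb_or andbA [(x != a) && _]andbC.
Qed.

Definition Pc k n (K : {set 'I_k}) (A : {set 'I_n})
  (tau : {ffun 'I_k -> {set 'I_n}}) : bool :=
  [&& [forall t, (t \notin K) ==> (tau t == set0)],
      [forall s, forall t, (s != t) ==> [disjoint tau s & tau t]] &
      [forall t, tau t \subset A]].

Lemma PcP k n (K : {set 'I_k}) (A : {set 'I_n}) (tau : {ffun 'I_k -> {set 'I_n}}) :
  reflect [/\ forall t, t \notin K -> tau t = set0,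
              forall s t, s != t -> [disjoint tau s & tau t] &
              forall t, tau t \subset A] (Pc K A tau).
Proof.
apply: (iffP and3P) => [[/forallP h1 /forallP h2 /forallP h3] | [h1 h2 h3]]; split.
- by move=> t tK; have /implyP/(_ tK)/eqP := h1 t.
- by move=> s t st; have /forallP/(_ t)/implyP/(_ st) := h2 s.
- by [].
- by apply/forallP => t; apply/implyP => /h1 ->.
- by apply/forallP => s; apply/forallP => t; apply/implyP => /h2.
- by apply/forallP.
Qed.

Lemma multi (R : comNzRingType) n N (r : 'I_n -> 'I_N -> R) k (j : 'I_k -> 'I_N)
  (hj : injective j) : forall (K : {set 'I_k}) (A : {set 'I_n}),
  F r (j @: K) A =
  \sum_(tau : {ffun 'I_k -> {set 'I_n}} | Pc K A tau)
     (\prod_(t in K) cc r (tau t) (j t)) * F r set0 (A :\: \bigcup_(t < k) tau t).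
Proof.
move=> K; have [m] := ubnP #|K|; elim: m K => // m IH K hK A.
case: (set_0Vmem K) => [-> | [t0 t0K]].
  rewrite imset0 (big_pred1 [ffun => set0]).
    rewrite big_set0 mul1r big1 ?setD0 // => t _; by rewrite ffunE.
  move=> tau /=; apply/idP/eqP.
    move=> /PcP[h1 _ _]; by apply/ffunP => t; rewrite ffunE h1 ?inE.
  move=> ->; apply/PcP; split.
  - by move=> t _; rewrite ffunE.
  - by move=> s t _; rewrite !ffunE -setI_eq0 set0I.
  - by move=> t; rewrite ffunE sub0set.
have eK : j @: K = j t0 |: j @: (K :\ t0) by rewrite -imsetU1 setD1K.
have jn : j t0 \notin j @: (K :\ t0).
  apply/imsetP => -[t]; rewrite !inE => /andP[tt0 _] /hj e.
  by rewrite e eqxx in tt0.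
have hK' : (#|K :\ t0| < m)%N.
  by move: (cardsD1 t0 K) hK; rewrite t0K add1n => ->; rewrite ltnS.
rewrite eK (inv r jn A).
under eq_bigr => s _ do rewrite (IH _ hK') big_distrr /=.
rewrite [RHS](partition_big (fun tau : {ffun 'I_k -> {set 'I_n}} => tau t0)
            (fun s : {set 'I_n} => s \subset A)) /=; last first.
  by move=> tau /PcP[_ _ ->].
apply: eq_bigr => s sA.
rewrite [RHS](reindex_onto (fun tau' : {ffun 'I_k -> {set 'I_n}} => upd tau' t0 s)
   (fun tau : {ffun 'I_k -> {set 'I_n}} => upd tau t0 set0)) /=; last first.
  move=> tau /andP[_ /eqP e]; apply/ffunP => t; rewrite !ffunE.
  by case: eqP => // ->.
apply: eq_big => tau'.
  apply/idP/idP.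
    move=> /PcP[h1 h2 h3].
    have e0 : tau' t0 = set0 by apply: h1; rewrite !inE eqxx.
    have u1 : upd tau' t0 s t0 == s by rewrite ffunE eqxx.
    have u2 : upd (upd tau' t0 s) t0 set0 == tau'.
      by apply/eqP/ffunP => t; rewrite !ffunE; case: eqP => // ->; rewrite e0.
    rewrite u1 u2 !andbT; apply/PcP; split.
    - move=> t tK; rewrite ffunE; case: (t =P t0) => [e|ne].
        by rewrite e t0K in tK.
      by apply: h1; rewrite !inE (negbTE tK) andbF.
    - move=> s1 t ne; rewrite !ffunE.
      case: (s1 =P t0) => [es1|ns1]; case: (t =P t0) => [et|nt].
      + by rewrite es1 et eqxx in ne.
      + rewrite disjoint_sym disjoint_subset; apply: subset_trans (h3 t) _.
        by apply/subsetP => x; rewrite !inE => /andP[].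
      + rewrite disjoint_subset; apply: subset_trans (h3 s1) _.
        by apply/subsetP => x; rewrite !inE => /andP[].
      + exact: h2.
    - move=> t; rewrite ffunE; case: eqP => _ //; apply: subset_trans (h3 t) _.
      exact: subsetDl.
  move=> /andP[/andP[/PcP[h1 h2 h3] _] /eqP e].
  have e0 : tau' t0 = set0 by rewrite -e ffunE eqxx.
  have ht : forall t, t != t0 -> tau' t = upd tau' t0 s t.
    by move=> t ne; rewrite ffunE (negbTE ne).
  apply/PcP; split.
  - move=> t; rewrite !inE negb_and negbK; case/orP => [/eqP -> //| tK].
    have ne : t != t0 by apply/eqP => et; rewrite et t0K in tK.
    by rewrite ht // h1.
  - move=> s1 t ne; case: (s1 =P t0) => [->|/eqP ns1].
      by rewrite e0 -setI_eq0 set0I.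
    case: (t =P t0) => [->|/eqP nt].
      by rewrite e0 -setI_eq0 setI0.
    by rewrite !ht //; apply: h2.
  - move=> t; case: (t =P t0) => [->|/eqP ne]; first by rewrite e0 sub0set.
    have d := h2 t t0 ne.
    rewrite -(ht t ne) [upd tau' t0 s t0]ffunE eqxx in d.
    apply/subsetP => x xt; rewrite !inE (disjointFr d xt) /=.
    by apply: (subsetP (h3 t)); rewrite -ht.
move=> /PcP[h1 h2 h3].
have e0 : tau' t0 = set0 by apply: h1; rewrite !inE eqxx.
rewrite [in RHS](bigD1 t0 t0K) /= [upd tau' t0 s t0]ffunE eqxx [LHS]mulrA.
congr (_ * _ * _).
  apply: eq_big => t; first by rewrite !inE andbC.
  by rewrite !inE => /andP[ne _]; rewrite ffunE (negbTE ne).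
congr (F r set0 _).
rewrite setDDl (bigD1 t0) // [in RHS](bigD1 t0) //= [upd tau' t0 s t0]ffunE eqxx e0 set0U.
congr (_ :\: (_ :|: _)); apply: eq_bigr => t ne; by rewrite ffunE (negbTE ne).
Qed.

Lemma bridge_aux (R : comNzRingType) n N (r : 'I_n -> 'I_N -> R) (x0 : 'I_n)
  (T : {set 'I_N}) (A : {set 'I_n}) : Ssum T (rsub r A) = F r T A.
Proof.
rewrite /Ssum /F.
have hm : size (rsub r A) = size (enum A) by rewrite size_map.
pose e := enum A.
have ue : uniq e := enum_uniq _.
pose g := fun o : 'I_(size (rsub r A)) => nth x0 e o.
have ltg : forall o : 'I_(size (rsub r A)), (o < size e)%N.
  by move=> o; rewrite /e -hm.
have gA : forall o, g o \in A by move=> o; rewrite -mem_enum mem_nth ?ltg.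
have ginj : injective g.
  move=> o1 o2 E; apply: ord_inj.
  by rewrite -(index_uniq x0 (ltg o1) ue) -(index_uniq x0 (ltg o2) ue) -/(g o1) E.
have ltA : forall i, (index i e < size (rsub r A))%N = (i \in A).
  by move=> i; rewrite hm index_mem mem_enum.
pose idx := fun i : 'I_n => (insub (index i e) : option 'I_(size (rsub r A))).
have idxg : forall o, idx (g o) = Some o.
  move=> o; rewrite /idx; case: insubP => [u _ hu | ].
    by congr Some; apply/val_inj; rewrite hu index_uniq ?ltg.
  by rewrite index_uniq ?ltg // ltn_ord.
have idxS : forall i o, idx i = Some o -> i = g o.
  move=> i o; rewrite /idx; case: insubP => [u hi hu [<-] | //].
  rewrite /g hu nth_index // -index_mem -hm //.
have idxN : forall i, i \notin A -> idx i = None.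
  move=> i iA; rewrite /idx; case: insubP => [u hi _|//].
  by rewrite ltA (negbTE iA) in hi.
pose h := fun f : {ffun 'I_(size (rsub r A)) -> 'I_N} =>
  [ffun i => omap f (idx i)].
have hinj : injective h.
  move=> f1 f2 E; apply/ffunP => o.
  by move/ffunP/(_ (g o)): E; rewrite !ffunE idxg => -[].
pose P := [set f : {ffun 'I_(size (rsub r A)) -> 'I_N} |
             injectiveb f && [forall i, f i \notin T]].
have img : [set rho | good T A rho] = h @: P.
  apply/setP => rho; rewrite inE; apply/goodP/imsetP.
    move=> [h1 h2 h3].
    have ex : forall o, exists x, rho (g o) = Some x.
      move=> o; have := h1 (g o); rewrite gA; case: (rho (g o)) => // x _.
      by exists x.
    have [u hu] := fin_all_exists ex.
    exists (finfun u).
      rewrite inE; apply/andP; split.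
        apply/injectiveP => o1 o2; rewrite !ffunE => E.
        by apply: ginj; apply: (h2 _ _ (u o1)); rewrite // E.
      by apply/forallP => o; rewrite ffunE; apply: (h3 (g o)).
    apply/ffunP => i; rewrite ffunE.
    case: (boolP (i \in A)) => iA.
      have := h1 i; rewrite iA; case E: (idx i) => [o|].
        by move: (idxS _ _ E) => ->; rewrite /= ffunE hu.
      by move: E; rewrite /idx; case: insubP => //; rewrite ltA iA.
    rewrite idxN //=; apply/eqP; rewrite -[_ == _]negbK h1 iA //.
  move=> [f]; rewrite inE => /andP[/injectiveP finj /forallP fT] ->.
  split.
  - move=> i; rewrite ffunE; case: (boolP (i \in A)) => iA.
      case E: (idx i) => [o|] //=.
      by move: E; rewrite /idx; case: insubP => //; rewrite ltA iA.
    by rewrite idxN.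
  - move=> i i' x; rewrite !ffunE.
    case E: (idx i) => [o|] //=; case E': (idx i') => [o'|] //= [<-] [].
    by move/finj => eo; rewrite (idxS _ _ E) (idxS _ _ E') eo.
  - move=> i x; rewrite ffunE; case E: (idx i) => [o|] //= [<-]; exact: fT.
rewrite (eq_bigl (mem [set rho | good T A rho])); last by move=> rho; rewrite !inE.
rewrite img big_imset /=; last by move=> f1 f2 _ _; apply: hinj.
apply: eq_big => f; first by rewrite inE.
move=> _.
rewrite (bigID (mem A)) /= [X in _ = _ * X]big1 ?mulr1; last first.
  by move=> i iA; rewrite ffunE idxN.
have -> : \prod_(i in A) wv r i (h f i) = \prod_(i in g @: setT) wv r i (h f i).
  apply: eq_bigl => x; apply/idP/imsetP => [xA | [o _ ->]]; last exact: gA.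
  have hx : (index x e < size (rsub r A))%N by rewrite hm index_mem mem_enum.
  by exists (Ordinal hx) => //; rewrite /g /= nth_index // mem_enum.
rewrite (big_imset (fun i => wv r i (h f i)) (in2W ginj)) /=.
apply: eq_big => [o|o _]; first by rewrite inE.
by rewrite ffunE idxg /= /rsub (nth_map x0) ?ltg.
Qed.

Lemma bridge (R : comNzRingType) n N (r : 'I_n -> 'I_N -> R)
  (T : {set 'I_N}) (A : {set 'I_n}) : Ssum T (rsub r A) = F r T A.
Proof.
case: n r A => [|n] r A; last exact: (bridge_aux r ord0).
have e : enum A = [::].
  by apply/eqP; rewrite -size_eq0 -cardE; apply/eqP/eq_card0 => -[].
rewrite /Ssum /rsub e /= /F.
rewrite (big_pred1 (ffun0 (card_ord 0))); last first.
  move=> rho /=; have -> : rho = ffun0 (card_ord 0) by apply/ffunP => -[].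
  rewrite eqxx; apply/andP; split; [by apply/injectiveP => -[] | by apply/forallP => -[]].
rewrite (big_pred1 (ffun0 (card_ord 0))); last first.
  move=> rho /=; have -> : rho = ffun0 (card_ord 0) by apply/ffunP => -[].
  by rewrite eqxx; apply/goodP; split => -[].
by rewrite !big_ord0.
Qed.

Unset Implicit Arguments.
Set Strict Implicit.

Theorem proposition2p7 (p : nat) (hp : prime p) (n N k : nat)
    (r : 'I_n -> 'I_N -> 'F_p) (j : 'I_k -> 'I_N) (hj : injective j) :
  Ssum [set j t | t : 'I_k] (rsub r setT) =
  \sum_(tau : {ffun 'I_k -> {set 'I_n}} |
          [forall s : 'I_k, forall t : 'I_k,
             (s != t) ==> [disjoint tau s & tau t]])
     (\prod_(t < k)
        ((-1) ^+ #|tau t| * (#|tau t|`!)%:R * rprod r (tau t) (j t)))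
     * S0 (rsub r (~: \bigcup_(t < k) tau t)).
Proof.
have -> : [set j t | t : 'I_k] = j @: setT by apply/setP => x; apply/imsetP/imsetP => -[t _ ->]; exists t.
rewrite bridge (multi r hj setT setT).
apply: eq_big => tau.
  apply/PcP/idP => [[_ h2 _] | h].
    by apply/forallP => s; apply/forallP => t; apply/implyP => /h2.
  split; [by move=> t; rewrite inE | | by move=> t; apply: subsetT].
  by move=> s t st; move/forallP/(_ s)/forallP/(_ t)/implyP: h; apply.
move=> _; rewrite /S0 bridge setTD.
congr (_ * _); apply: eq_bigl => t; by rewrite inE.
Qed.
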